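(* Let $\kappa$ be a finite field of characteristic $p \neq 2$, let $\chi$ be the quadratic character of $\kappa^\times$, and let $\mu$ be the Möbius function on non-zero elements of $\kappa[u]$. Let $a, b \in \kappa^\times$ and let $g_1, g_2 \in \kappa[u]$ be relatively prime (not both zero), using the convention $\deg 0 = -\infty$. Then $$\mu(a g_1^{2p} + b u g_2^{2p}) = \begin{cases} -\chi(-1)^{\deg g_2} & \text{if } \deg g_1 \le \deg g_2,\\ \chi(-1)^{\deg g_1} & \text{if } \deg g_1 > \deg g_2.\end{cases}$$
   Context: For non-zero $P \in \kappa[u]$, $\mu(P) = 0$ if $P$ is divisible by the square of a non-constant polynomial, and otherwise $\mu(P) = (-1)^r$ where $r$ is the number of (monic) irreducible factors of $P$; $\mu$ of a non-zero constant is $1$. *)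

(* Defs.v *)
From HB Require Import structures.
From mathcomp Require Import all_boot all_order all_algebra.
From Stdlib Require Import ClassicalEpsilon.
Set Implicit Arguments. Unset Strict Implicit. Unset Printing Implicit Defensive.
Import Order.TTheory GRing.Theory Num.Theory.
Local Open Scope ring_scope.

Definition irreducibleb (F : fieldType) (q : {poly F}) : bool :=
  if excluded_middle_informative (irreducible_poly q) then true else false.

(* P is divisible by the square of a non-constant polynomial.
   Any such divisor d of a nonzero P satisfies size d <= size P, so it is
   enough to range over the finite type {poly_(size P) F}. *)
Definition has_square_factor (F : finFieldType) (P : {poly F}) : bool :=
  [exists d : {poly_(size P) F}, (1 < size (d : {poly F}))%N && ((d : {poly F}) ^+ 2 %| P)].

(* Number of monic irreducible factors of P (i.e. distinct monic irreducible
   divisors; for squarefree P this is the number of irreducible factors). *)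
Definition nb_irr_factors (F : finFieldType) (P : {poly F}) : nat :=
  #|[pred q : {poly_(size P) F} | [&& (q : {poly F}) \is monic,
       irreducibleb (q : {poly F}) & (q : {poly F}) %| P]]|.

(* Möbius function on nonzero polynomials of F[u]; value at 0 is irrelevant (set to 0). *)
Definition mobius (F : finFieldType) (P : {poly F}) : int :=
  if P == 0 then 0
  else if has_square_factor P then 0
  else (-1) ^+ nb_irr_factors P.

Definition qchar (F : finFieldType) (x : F) : int :=
  if x == 0 then 0
  else if [exists y : F, y ^+ 2 == x] then 1 else -1.

(* Main.v *)
Require Import Defs.
From HB Require Import structures.
From mathcomp Require Import all_boot all_order all_algebra.
From mathcomp Require Import all_field perm zify.
From Stdlib Require Import ClassicalEpsilon.
Import Order.TTheory GRing.Theory Num.Theory.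
Local Open Scope ring_scope.

Definition frobq (F : finFieldType) (L : fieldExtType F) (x : L) : L := x ^+ #|F|.

Lemma frobq_zmod (F : finFieldType) (L : fieldExtType F) : zmod_morphism (@frobq F L).
Proof.
rewrite /frobq => x y.
have [p _ pcharFp] := finPcharP F; rewrite (card_pprimeChar pcharFp).
elim: (logn _ _) => // n IHn; rewrite expnSr !exprM {}IHn.
by rewrite -(pchar_lalg L) in pcharFp; rewrite -pFrobenius_autE rmorphB.
Qed.

Lemma frobq_monoid (F : finFieldType) (L : fieldExtType F) : monoid_morphism (@frobq F L).
Proof. by rewrite /frobq; split=> [|x y]; rewrite ?exprMn ?expr1n. Qed.

HB.instance Definition _ (F : finFieldType) (L : fieldExtType F) :=
  GRing.isZmodMorphism.Build L L (@frobq F L) (@frobq_zmod F L).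
HB.instance Definition _ (F : finFieldType) (L : fieldExtType F) :=
  GRing.isMonoidMorphism.Build L L (@frobq F L) (@frobq_monoid F L).

Section Frob.
Variables (F : finFieldType) (L : fieldExtType F).
Local Notation sig := (@frobq F L).

Lemma frobq_fixed (x : L) : (sig x == x) = (x \in 1%VS).
Proof. by rewrite Fermat's_little_theorem dimv1 expn1. Qed.

Lemma frobq_alg (a : F) : sig (a%:A) = a%:A.
Proof. by apply/eqP; rewrite frobq_fixed; apply/vlineP; exists a. Qed.

Lemma frobq_fixedP (x : L) : sig x = x -> exists a : F, x = a%:A.
Proof. by move/eqP; rewrite frobq_fixed => /vlineP[k ->]; exists k. Qed.

Lemma frobq_map_alg (q : {poly F}) : map_poly sig (map_poly (in_alg L) q) = map_poly (in_alg L) q.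
Proof. by rewrite -map_poly_comp; apply: eq_map_poly => a /=; rewrite frobq_alg. Qed.

Lemma frobq_root (q : {poly F}) x : root (map_poly (in_alg L) q) x -> root (map_poly (in_alg L) q) (sig x).
Proof.
move=> /eqP h; apply/eqP; rewrite -{1}frobq_map_alg horner_map /= h.
exact: rmorph0.
Qed.

Definition pre (x : L) : F := odflt 0 [pick a : F | a%:A == x].

Lemma preK x : sig x = x -> (pre x)%:A = x.
Proof.
move=> /frobq_fixedP[a ->]; rewrite /pre; case: pickP => [b /eqP //|/(_ a)].
by rewrite eqxx.
Qed.

Lemma descend (P : {poly L}) : map_poly sig P = P -> map_poly (in_alg L) (map_poly pre P) = P.
Proof.
move=> hP.
rewrite -map_poly_comp_id0 ?rmorph0 //; apply: map_poly_id => c /(nthP 0)[k _ <-].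
by rewrite /= preK // -coef_map hP.
Qed.

End Frob.
Arguments frobq_fixedP {F L x}.
Arguments frobq_alg {F L}.
Arguments frobq_root {F L q x}.
Arguments frobq_fixed {F L}.

Lemma card_gt_ord n (i : 'I_n) : #|[pred j : 'I_n | (i < j)%N]| = (n - i.+1)%N.
Proof.
rewrite -sum1_card.
have h : forall m, (\sum_(0 <= j < m | (i < j)%N) 1 = m - i.+1)%N.
  elim=> [|m IH]; first by rewrite big_nil.
  rewrite big_mkcond big_nat_recr //= -big_mkcond IH.
  by case: ltnP => h; lia.
by rewrite -(h n) big_mkord.
Qed.

Lemma sum_gt_ord n : (\sum_(i < n) (n - i.+1) = 'C(n, 2))%N.
Proof.
elim: n => [|n IH]; first by rewrite big_ord0.
rewrite big_ord_recl /= binS bin1 -IH addnC; congr (_ + _)%N; first by rewrite subn1.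
Qed.

Lemma vdm_sq (R : comRingType) n (x : 'I_n -> R) :
  (\prod_(i < n) \prod_(j < n | (i < j)%N) (x j - x i)) ^+ 2 =
  (-1) ^+ 'C(n, 2) * \prod_(i < n) \prod_(j < n | j != i) (x i - x j).
Proof.
set d := \prod_(i < n) _.
have E1 : \prod_(i < n) \prod_(j < n | j != i) (x i - x j) =
   (\prod_(i < n) \prod_(j < n | (i < j)%N) (x i - x j)) *
   (\prod_(i < n) \prod_(j < n | (j < i)%N) (x i - x j)).
  rewrite -big_split /=; apply: eq_bigr => i _.
  rewrite (bigID (fun j : 'I_n => (i < j)%N)) /=; congr (_ * _); apply: eq_bigl => j.
    by rewrite -val_eqE /=; case: ltngtP.
  by rewrite -val_eqE /=; case: ltngtP.
have E2 : \prod_(i < n) \prod_(j < n | (j < i)%N) (x i - x j) = d.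
  rewrite /d; under eq_bigr do rewrite big_mkcond.
  rewrite exchange_big /=; apply: eq_bigr => i _.
  by rewrite [RHS]big_mkcond.
have E3 : \prod_(i < n) \prod_(j < n | (i < j)%N) (x i - x j) = (-1) ^+ 'C(n, 2) * d.
  rewrite /d -sum_gt_ord -prodrXr -big_split /=; apply: eq_bigr => i _.
  rewrite -card_gt_ord -prodr_const -big_split /=; apply: eq_bigr => j _.
  by rewrite mulN1r opprB.
rewrite E1 E2 E3 !mulrA -exprD -signr_odd addnn odd_double expr0 mul1r expr2.
done.
Qed.

Lemma deriv_prod_root (K : fieldType) n (x : 'I_n -> K) i :
  (\prod_(j < n) ('X - (x j)%:P))^`().[x i] = \prod_(j < n | j != i) (x i - x j).
Proof.
rewrite (bigD1 i) //= derivM derivXsubC mul1r hornerD hornerM hornerXsubC subrr mul0r addr0.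
by rewrite horner_prod; apply: eq_bigr => j _; rewrite hornerXsubC.
Qed.

Lemma exists_root (K : fieldType) (d : {poly K}) (s : seq K) :
  (1 < size d)%N -> d %| \prod_(z <- s) ('X - z%:P) -> exists2 z, z \in s & root d z.
Proof.
move=> hs /dvdp_prod_XsubC[m hm].
case E: (mask m s) hm => [|z t] hm.
  by move: hm; rewrite big_nil => /eqp_size; rewrite size_poly1 => h; rewrite h in hs.
exists z; first by apply: (mem_mask (m:=m)); rewrite E mem_head.
by rewrite (eqp_root hm) root_prod_XsubC mem_head.
Qed.

Lemma irrbP (F : fieldType) (q : {poly F}) : reflect (irreducible_poly q) (Defs.irreducibleb q).
Proof. by rewrite /Defs.irreducibleb; case: excluded_middle_informative => h; constructor. Qed.

Section Roots.
Variables (F : finFieldType) (L : fieldExtType F) (n : nat) (r : 'I_n -> L).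
Hypothesis r_inj : injective r.
Variable f : {poly F}.
Hypothesis fnz : f != 0.
Hypothesis Df : map_poly (in_alg L) f = (lead_coef f)%:A *: \prod_(i < n) ('X - (r i)%:P).
Local Notation sig := (@frobq F L).
Local Notation "p ^i" := (map_poly (in_alg L) p) (at level 2, format "p ^i").

Lemma prodE : \prod_(i < n) ('X - (r i)%:P) = \prod_(z <- [seq r i | i in 'I_n]) ('X - z%:P).
Proof. by rewrite big_image. Qed.

Lemma root_fr x : root f^i x = [exists i, x == r i].
Proof.
rewrite Df rootZ; last by rewrite scaler_eq0 oner_eq0 orbF lead_coef_eq0.
rewrite prodE root_prod_XsubC; apply/imageP/existsP => [[i _ ->]|[i /eqP ->]].
  by exists i.
by exists i.
Qed.

Definition pif (i : 'I_n) : 'I_n := odflt i [pick j | r j == sig (r i)].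

Lemma r_pif i : r (pif i) = sig (r i).
Proof.
have : root f^i (sig (r i)).
  by apply: frobq_root; rewrite root_fr; apply/existsP; exists i.
rewrite root_fr => /existsP[j /eqP hj].
rewrite /pif; case: pickP => [k /eqP //|/(_ j)]; by rewrite hj eqxx.
Qed.

Lemma pif_inj : injective pif.
Proof. move=> i j h; apply: r_inj; have := fmorph_inj (@frobq F L); apply. by move: (congr1 r h); rewrite !r_pif. Qed.

Definition pi : {perm 'I_n} := perm pif_inj.

Lemma r_pi i : r (pi i) = sig (r i).
Proof. by rewrite permE r_pif. Qed.

Lemma root_piX (d : {poly F}) i k : root d^i (r i) -> root d^i (r ((pi ^+ k)%g i)).
Proof.
move=> h; elim: k => [|k IH]; first by rewrite expg0 perm1.
by rewrite expgSr permM r_pi; apply: frobq_root.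
Qed.

Lemma porbit_pi_mem i l : (pi l \in porbit pi i) = (l \in porbit pi i).
Proof.
rewrite porbit_sym [RHS]porbit_sym.
have := porbit_perm pi 1 l; rewrite expg1 => ->; done.
Qed.

Definition PO (O : {set 'I_n}) := \prod_(l in O) ('X - (r l)%:P).

Lemma POE O : PO O = \prod_(z <- [seq r l | l in O]) ('X - z%:P).
Proof. by rewrite big_image. Qed.

Lemma PO_frob i : map_poly sig (PO (porbit pi i)) = PO (porbit pi i).
Proof.
rewrite /PO rmorph_prod /=; under eq_bigr do rewrite map_polyXsubC /= -r_pi.
rewrite [RHS](reindex_inj (@perm_inj _ pi)); apply: eq_bigl => l.
by rewrite porbit_pi_mem.
Qed.

Definition QO (O : {set 'I_n}) : {poly F} := map_poly (@pre F L) (PO O).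

Lemma QOK i : (QO (porbit pi i))^i = PO (porbit pi i).
Proof. by rewrite /QO descend // PO_frob. Qed.

Lemma QO_monic i : QO (porbit pi i) \is monic.
Proof. by rewrite -(map_monic (in_alg L)) QOK /PO monic_prod_XsubC. Qed.

Lemma size_QO i : size (QO (porbit pi i)) = #|porbit pi i|.+1.
Proof. by rewrite -(size_map_poly (in_alg L)) QOK POE size_prod_XsubC size_image. Qed.

Lemma QO_dvd d i : root d^i (r i) -> QO (porbit pi i) %| d.
Proof.
move=> h; rewrite -(dvdp_map (in_alg L)) QOK POE; apply: uniq_roots_dvdp.
  apply/allP => z /imageP[l lO ->]; case/porbitP: lO => k ->.
  exact: root_piX.
by rewrite uniq_rootsE map_inj_uniq ?enum_uniq.
Qed.

Lemma QO_irr i : irreducible_poly (QO (porbit pi i)).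
Proof.
split; first by rewrite size_QO ltnS card_gt0; apply/set0Pn; exists i; apply: porbit_id.
move=> d hsz hdvd.
have dnz : d != 0.
  apply: contraTneq hdvd => ->; rewrite dvd0p -size_poly_eq0 size_QO //.
have hs : (1 < size d)%N by rewrite ltn_neqAle eq_sym hsz lt0n size_poly_eq0.
have : d^i %| PO (porbit pi i) by rewrite -QOK dvdp_map.
rewrite POE => /exists_root; rewrite size_map_poly => /(_ hs)[z /imageP[l lO ->] hr].
have := QO_dvd d l hr; rewrite (_ : porbit pi l = porbit pi i) => [h|].
  by apply/andP; split.
by apply/eqP; rewrite eq_porbit_mem.
Qed.

Lemma QO_f i : QO (porbit pi i) %| f.
Proof. by apply: QO_dvd; rewrite root_fr; apply/existsP; exists i. Qed.

Lemma porbits_card : #|porbits pi| = nb_irr_factors f.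
Proof.
pose kk (O : {set 'I_n}) : {poly_(size f) F} := insubd (0 : {poly_(size f) F}) (QO O).
have kkE i : val (kk (porbit pi i)) = QO (porbit pi i).
  rewrite /kk insubdK //. exact: (dvdp_leq fnz (QO_f i)).
have inj : {in porbits pi &, injective kk}.
  move=> O1 O2 /imsetP[i1 _ ->] /imsetP[i2 _ ->] /(congr1 val); rewrite !kkE => hQ.
  have := congr1 (map_poly (in_alg L)) hQ; rewrite !QOK !POE => hP.
  apply/setP => l; have := congr1 (fun P => root P (r l)) hP.
  by rewrite /= !root_prod_XsubC !(mem_image r_inj).
rewrite /nb_irr_factors -(card_in_imset inj); apply: eq_card => q.
rewrite inE; apply/imsetP/idP.
  move=> [O /imsetP[i _ ->] ->]; rewrite kkE QO_monic QO_f andbT /=.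
  by apply/irrbP/QO_irr.
case/and3P => qm /irrbP qi qf.
have [i hr] : exists i, root (val q)^i (r i).
  have : (val q)^i %| \prod_(z <- [seq r i | i in 'I_n]) ('X - z%:P).
    rewrite -prodE -(dvdpZr _ _ (_ : (lead_coef f)%:A != 0)) -?Df ?dvdp_map //.
    by rewrite scaler_eq0 oner_eq0 orbF lead_coef_eq0.
  case/exists_root => [|z /imageP[i _ ->] hr]; last by exists i.
  by rewrite size_map_poly; case: qi.
exists (porbit pi i); first by apply: imset_f.
apply: val_inj; rewrite kkE.
have h := QO_dvd _ _ hr.
have hs : size (QO (porbit pi i)) != 1.
  by rewrite size_QO eqSS -lt0n card_gt0; apply/set0Pn; exists i; apply: porbit_id.
have := apply_irredp qi hs h.
by rewrite eqp_monic ?QO_monic // => /eqP ->.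
Qed.

Definition delta := \det (Vandermonde n (\row_j r j)).

Lemma deltaE : delta = \prod_(i < n) \prod_(j < n | (i < j)%N) (r j - r i).
Proof. by rewrite /delta det_Vandermonde; apply: eq_bigr => i _; apply: eq_bigr => j _; rewrite !mxE. Qed.

Lemma delta_neq0 : delta != 0.
Proof.
rewrite deltaE; apply/prodf_neq0 => i _; apply/prodf_neq0 => j hij.
rewrite subr_eq0; apply/eqP => /r_inj h; by rewrite h ltnn in hij.
Qed.

Lemma frob_delta : sig delta = (-1) ^+ odd_perm pi * delta.
Proof.
rewrite /delta -det_map_mx.
have -> : map_mx sig (Vandermonde n (\row_j r j)) = col_perm pi (Vandermonde n (\row_j r j)).
  by apply/matrixP => i j; rewrite !mxE rmorphXn /= r_pi.
by rewrite col_permE det_mulmx det_perm odd_permV mulrC.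
Qed.

Lemma stick (e : F) (w : L) : sig w = w -> delta ^+ 2 = e%:A * w ^+ 2 -> (2 : F) != 0 ->
   odd (nb_irr_factors f) = odd n (+) ~~ [exists y : F, y ^+ 2 == e].
Proof.
move=> hw hD h2.
have Dnz := delta_neq0.
have wnz : w != 0.
  apply: contraNneq Dnz => w0; move: hD; rewrite w0 expr0n mulr0 => /eqP.
  by rewrite expf_eq0.
have h2L : (2 : L) != 0.
  by rewrite -(rmorph_nat (in_alg L)) fmorph_eq0.
have key : (sig delta == delta) = [exists y : F, y ^+ 2 == e].
  apply/idP/existsP => [/eqP /frobq_fixedP[t ht] | [y /eqP hy]].
    have [u hu] := frobq_fixedP hw.
    have unz : u != 0 by apply: contraNneq wnz => u0; rewrite hu u0 scale0r.
    exists (t / u); move: hD; rewrite ht hu -!in_algE -!rmorphXn -rmorphM /= => /(fmorph_inj (in_alg L)) ht2.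
    by rewrite expr_div_n ht2 -mulrA divff ?mulr1 // expf_neq0.
  have : delta ^+ 2 == ((in_alg L) y * w) ^+ 2 by rewrite hD exprMn -rmorphXn hy.
  rewrite eqf_sqr => /orP[] /eqP ->; rewrite ?rmorphN rmorphM /= frobq_alg hw //.
have hodd : odd_perm pi = ~~ (sig delta == delta).
  rewrite frob_delta; case: (odd_perm pi); rewrite ?expr1 ?expr0 ?mul1r ?eqxx //.
  rewrite mulN1r eq_sym -subr_eq0 opprK -mulr2n -mulr_natr mulf_eq0 negb_or Dnz /=.
  by rewrite h2L.
rewrite -porbits_card -key -hodd /odd_perm card_ord.
by case: (odd n); case: (odd #|porbits pi|).
Qed.

Lemma frob_prod_eval (q : {poly F}) : sig (\prod_(i < n) (q^i).[r i]) = \prod_(i < n) (q^i).[r i].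
Proof.
transitivity (\prod_(i < n) (q^i).[r (pi i)]).
  rewrite rmorph_prod; apply: eq_bigr => i _.
  by rewrite r_pi -[in RHS]frobq_map_alg horner_map.
by rewrite [RHS](reindex_inj (@perm_inj _ pi)).
Qed.

End Roots.

Lemma eqp_monic_scale (K : fieldType) (p q : {poly K}) : p %= q -> q \is monic -> p = lead_coef p *: q.
Proof.
move=> /eqpP[[c1 c2] /andP[c1nz c2nz] /= h] /monicP qm.
have hl : c1 * lead_coef p = c2 by rewrite -lead_coefZ h lead_coefZ qm mulr1.
by apply: (scalerI c1nz); rewrite h scalerA hl.
Qed.

Arguments eqp_monic_scale {K p q}.

Lemma qchar_m1 (F : finFieldType) : qchar (-1 : F) = if [exists y : F, y ^+ 2 == -1] then 1 else -1.
Proof. by rewrite /qchar oppr_eq0 oner_eq0. Qed.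

Lemma sq_sign (F : finFieldType) C : [exists y : F, y ^+ 2 == (-1) ^+ C] = ~~ odd C || [exists y : F, y ^+ 2 == -1].
Proof.
rewrite -signr_odd; case: (odd C) => /=; first by rewrite expr1.
by rewrite expr0; apply/existsP; exists 1; rewrite expr1n.
Qed.

Lemma oddC1 m : odd 'C(m.*2.+1, 2) = odd m.
Proof.
rewrite bin2; have -> : (m.*2.+1 * (m.*2.+1).-1 = (m.*2.+1 * m).*2)%N by nia.
by rewrite doubleK oddM /= odd_double.
Qed.

Lemma oddC2 m : odd 'C(m.*2, 2) = odd m.
Proof.
case: m => [//|m].
rewrite bin2; have -> : ((m.+1).*2 * (m.+1).*2.-1 = ((m.+1) * (m.*2.+1)).*2)%N by nia.
by rewrite doubleK oddM /= odd_double andbT.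
Qed.

Lemma size_exp_nz (K : fieldType) (q : {poly K}) k : q != 0 -> size (q ^+ k) = ((size q).-1 * k).+1.
Proof. by move=> hq; rewrite -size_exp prednK // size_poly_gt0 expf_neq0. Qed.

Theorem lemma3p5 (F : finFieldType) (p : nat) (hp : p \in [pchar F]) (hp2 : p != 2%N)
  (a b : F) (ha : a != 0) (hb : b != 0) (g1 g2 : {poly F})
  (hcop : coprimep g1 g2) (hnz : ~~ ((g1 == 0) && (g2 == 0))) :
  mobius (a *: g1 ^+ (2 * p) + b *: ('X * g2 ^+ (2 * p))) =
  (if (size g1 <= size g2)%N then - qchar (-1 : F) ^+ (size g2).-1
   else qchar (-1 : F) ^+ (size g1).-1).
Proof.
have pr := pcharf_prime hp.
have podd : odd p by case: (even_prime pr) => // h; rewrite h eqxx in hp2.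
have p0 : (0 < p)%N := prime_gt0 pr.
have h2 : (2 : F) != 0.
  apply/negP => /eqP h2; have := pcharf0 hp.
  rewrite -(odd_double_half p) podd natrD -mul2n natrM h2 mul0r addr0 => /eqP.
  by rewrite oner_eq0.
set f := a *: g1 ^+ (2 * p) + b *: ('X * g2 ^+ (2 * p)).
have h2p0 : forall q : {poly F}, q *+ (2 * p) = 0.
  by move=> q; rewrite mulrnA -mulr_natr -polyC_natr (pcharf0 hp) mulr0.
have df : f^`() = b *: g2 ^+ (2 * p).
  by rewrite /f derivD !derivZ derivM derivX !deriv_exp !h2p0 mul1r mulr0 addr0 scaler0 add0r.
have sep : separable_poly f.
  rewrite separable_poly.unlock df coprimepZr //; apply: coprimep_expr.
  rewrite coprimep_sym.
  have -> : f = (b *: ('X * g2 ^+ (2 * p).-1)) * g2 + a *: g1 ^+ (2 * p).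
    by rewrite /f addrC -scalerAl -mulrA -exprSr prednK // muln_gt0 p0.
  rewrite coprimep_addl_mul coprimepZr //; apply: coprimep_expr.
  by rewrite coprimep_sym.
have fnz : f != 0 := separable_poly_neq0 sep.
have hsq : has_square_factor f = false.
  apply/negbTE/existsP => [[d /andP[hd hdvd]]].
  by rewrite (separable_nosquare sep (_ : 1 < 2)%N) ?neq_ltn ?hd ?orbT in hdvd.
have [L hL] := FinSplittingFieldFor fnz; case: hL => rs Drs _.
have urs : uniq rs.
  by rewrite -separable_prod_XsubC -(eqp_separable Drs) separable_map.
set n := size rs.
pose r := fun i : 'I_n => nth 0 rs i.
have r_inj : injective r.
  by move=> i j /eqP; rewrite nth_uniq // => /eqP /val_inj.
have prE : \prod_(i < n) ('X - (r i)%:P) = \prod_(z <- rs) ('X - z%:P).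
  by rewrite (big_nth 0) big_mkord.
have Df : map_poly (in_alg L) f = (lead_coef f)%:A *: \prod_(i < n) ('X - (r i)%:P).
  by rewrite prE {1}(eqp_monic_scale Drs (monic_prod_XsubC _ _ _)) lead_coef_map.
have sizef : size f = n.+1.
  by rewrite -(size_map_poly (in_alg L) f) (eqp_size Drs) size_prod_XsubC.
pose h i := (map_poly (in_alg L) g2).[r i].
have hD0 : @delta F L n r ^+ 2 = (-1) ^+ 'C(n, 2) * (((lead_coef f)^-1 * b)%:A ^+ n * (\prod_(i < n) h i) ^+ (2 * p)).
  rewrite deltaE vdm_sq; congr (_ * _).
  have M : \prod_(j < n) ('X - (r j)%:P) = ((lead_coef f)^-1)%:A *: map_poly (in_alg L) f.
    rewrite Df scalerA -!in_algE -rmorphM mulVf ?lead_coef_eq0 // rmorph1 scale1r //.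
  transitivity (\prod_(i < n) (((lead_coef f)^-1 * b)%:A * (h i) ^+ (2 * p))).
    apply: eq_bigr => i _; rewrite -deriv_prod_root M derivZ deriv_map df hornerZ.
    rewrite map_polyZ rmorphXn hornerZ horner_exp /h mulrA -!in_algE -rmorphM //.
  by rewrite big_split /= prodr_const card_ord prodrXl.
set K := (lead_coef f)^-1 * b.
have hst : forall s : F, K ^+ n = s ^+ 2 -> odd (nb_irr_factors f) =
     odd n (+) ~~ (~~ odd 'C(n, 2) || [exists y : F, y ^+ 2 == -1]).
  move=> s hs; rewrite -sq_sign.
  apply: (@stick F L n r r_inj f fnz Df ((-1) ^+ 'C(n, 2)) (s%:A * (\prod_(i < n) h i) ^+ p) _ _ h2).
    by rewrite rmorphM rmorphXn /= frobq_alg (@frob_prod_eval F L n r r_inj f fnz Df).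
  have e1 : (K%:A : L) ^+ n = (s%:A) ^+ 2 by rewrite -!in_algE -!rmorphXn hs.
  have e2 : ((-1) ^+ 'C(n, 2) : F)%:A = ((-1) ^+ 'C(n, 2) : L) by rewrite -in_algE rmorph_sign.
  by rewrite hD0 e1 e2 mulnC exprM exprMn.
have hmob : forall s : F, K ^+ n = s ^+ 2 ->
    mobius f = (-1) ^+ (odd n (+) ~~ (~~ odd 'C(n, 2) || [exists y : F, y ^+ 2 == -1])).
  by move=> s hs; rewrite /mobius (negbTE fnz) hsq -signr_odd (hst s hs).
rewrite qchar_m1.
have sA2 : g2 != 0 -> size (b *: ('X * g2 ^+ (2 * p))) = ((size g2).-1 * (2 * p)).+2.
  move=> g2nz; rewrite size_scale // mulrC size_mulX ?expf_neq0 // size_exp_nz //.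
have sA1 : g1 != 0 -> size (a *: g1 ^+ (2 * p)) = ((size g1).-1 * (2 * p)).+1.
  by move=> g1nz; rewrite size_scale // size_exp_nz.
have h2p : (0 < 2 * p)%N by rewrite muln_gt0 p0.
case: leqP => hle.
  have g2nz : g2 != 0.
    apply: contraNneq hnz => g20; move: hle; rewrite g20 size_poly0 leqn0 size_poly_eq0 => ->.
    by rewrite eqxx.
  set d := (size g2).-1.
  have hlt : (size (a *: g1 ^+ (2 * p)) < size (b *: ('X * g2 ^+ (2 * p))))%N.
    rewrite sA2 //; have [->|g1nz] := eqVneq g1 0.
      by rewrite expr0n muln_eq0 /= (negbTE (lt0n_neq0 p0)) scaler0 size_poly0.
    rewrite sA1 // !ltnS leq_mul2r; apply/orP; right.
    by rewrite /d -!subn1 leq_sub2r.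
  have sizef2 : size f = (d * (2 * p)).+2 by rewrite /f addrC size_polyDl // sA2.
  have hn : n = (d * p).*2.+1.
    by move: sizef2; rewrite sizef => -[->]; rewrite -mul2n mulnCA.
  have hlf : lead_coef f = b * lead_coef g2 ^+ (2 * p).
    by rewrite /f addrC lead_coefDl // lead_coefZ (mulrC 'X) lead_coefMX lead_coef_exp.
  have lnz : lead_coef g2 != 0 by rewrite lead_coef_eq0.
  rewrite (hmob (((lead_coef g2)^-1 ^+ p) ^+ n)); last first.
    rewrite /K hlf invfM mulrAC mulVf // mul1r -exprVn -!exprM; congr (_ ^+ _); by rewrite [RHS]mulnC mulnA.
  rewrite hn oddC1 /= oddM podd andbT.
  rewrite odd_double /=.
  case: (boolP [exists y : F, y ^+ 2 == -1]) => _ /=; rewrite ?expr1n -?(signr_odd _ d);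
    case: (odd d) => /=; rewrite ?expr1 ?expr0 ?opprK //.
have g1nz : g1 != 0.
  by apply: contraTneq hle => ->; rewrite size_poly0.
set d := (size g1).-1.
have hlt : (size (b *: ('X * g2 ^+ (2 * p))) < size (a *: g1 ^+ (2 * p)))%N.
  rewrite sA1 //; have [->|g2nz] := eqVneq g2 0.
    by rewrite expr0n muln_eq0 /= (negbTE (lt0n_neq0 p0)) mulr0 scaler0 size_poly0.
  rewrite sA2 // ltnS.
  have h1 : (1 <= (size g2).-1.+1)%N by [].
  have h3 : ((size g2).-1.+1 <= d)%N.
    rewrite prednK ?size_poly_gt0 // /d -ltnS prednK ?size_poly_gt0 //.
  have : ((size g2).-1.+1 * (2 * p) <= d * (2 * p))%N by rewrite leq_mul2r h3 orbT.
  rewrite mulSn => hk; apply: leq_trans hk; rewrite addnC -addn2 leq_add2l.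
  exact: leq_pmulr p0.
have sizef1 : size f = (d * (2 * p)).+1 by rewrite /f size_polyDl // sA1.
have hn : n = (d * p).*2.
  by move: sizef1; rewrite sizef => -[->]; rewrite -mul2n mulnCA.
have hlf : lead_coef f = a * lead_coef g1 ^+ (2 * p).
  by rewrite /f lead_coefDl // lead_coefZ lead_coef_exp.
have lnz : lead_coef g1 != 0 by rewrite lead_coef_eq0.
rewrite (hmob (K ^+ (d * p))); last by rewrite -exprM hn -mul2n mulnC.
rewrite hn oddC2 odd_double oddM podd andbT /=.
case: (boolP [exists y : F, y ^+ 2 == -1]) => _ /=; rewrite ?expr1n -?(signr_odd _ d);
  case: (odd d) => /=; rewrite ?expr1 ?expr0 ?opprK //.
Qed.
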